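(* In the $\ell^1$ linear social choice setting, on every instance with $n$ voters the uniform projection rule satisfies $\mathbb{E}_{c\sim f_{\mathrm{UProj}}}[\mathrm{UW}(c)]\ge\frac nd$. Consequently $\mathrm{D}(f_{\mathrm{UProj}})=O(d)$.
   Context: Setting ($\ell^1$ linear social choice). Let $\Delta_d=\{x\in\mathbb{R}^d_{\ge 0}:\sum_i x^i=1\}$ (superscripts denote coordinates). An instance consists of $n$ voters and $m$ candidates, each a vector in $\Delta_d$, with every voter vector in $\mathrm{Cone}(C)$ (nonnegative linear combinations of the candidate vectors $C$). Utility $u_v(c)=v^\top c$; voters report consistent rankings; $\mathrm{UW}(c)=\sum_v u_v(c)$. A randomized rule outputs a distribution over $C$ and may use the candidate vectors but not the voter vectors. Distortion on an instance: $\max_c\mathrm{UW}(c)/\mathbb{E}_{c\sim f}[\mathrm{UW}(c)]$; $\mathrm{D}(f)$ is the supremum over instances, as a function of $d$. Uniform projection rule $f_{\mathrm{UProj}}$: with $\mu=(1/d,\dots,1/d)$, output a distribution $(p_c)_{c\in C}$ such that $\hat c=\sum_c p_c c$ minimizes $\mathrm{KL}(\mu\|x)=\sum_{i=1}^d\mu^i\ln(\mu^i/x^i)$ over $x\in\mathrm{CH}(C)$, the convex hull of $C$. *)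

(* Defs.v *)
From mathcomp Require Import all_boot all_order all_algebra.
From mathcomp Require Import reals exp.
Set Implicit Arguments. Unset Strict Implicit. Unset Printing Implicit Defensive.
Import Order.TTheory GRing.Theory Num.Theory.
Local Open Scope ring_scope.

Section L1SocialChoice.
Variable R : realType.

Definition in_simplex (d : nat) (x : 'I_d -> R) : Prop :=
  (forall i, 0 <= x i) /\ \sum_(i < d) x i = 1.

Definition is_dist (m : nat) (p : 'I_m -> R) : Prop :=
  (forall j, 0 <= p j) /\ \sum_(j < m) p j = 1.

Definition in_cone (d m : nat) (C : 'I_m -> 'I_d -> R) (v : 'I_d -> R) : Prop :=
  exists lam : 'I_m -> R, (forall j, 0 <= lam j) /\
    forall i, v i = \sum_(j < m) lam j * C j i.

Definition hull_point (d m : nat) (C : 'I_m -> 'I_d -> R) (p : 'I_m -> R)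
  : 'I_d -> R := fun i => \sum_(j < m) p j * C j i.

(* KL(mu || x) with mu uniform on [d] (for x with positive coordinates) *)
Definition KL_unif (d : nat) (x : 'I_d -> R) : R :=
  \sum_(i < d) (1 / d%:R) * ln ((1 / d%:R) / x i).

Definition positive_vec (d : nat) (x : 'I_d -> R) : Prop := forall i, 0 < x i.

(* p is an output of the uniform projection rule on candidate set C:
   chat = sum_c p_c c minimizes KL(mu || x) over x in CH(C)
   (KL is +oo at points with a zero coordinate, so the minimizer is a
   point with positive coordinates). *)
Definition uproj_output (d m : nat) (C : 'I_m -> 'I_d -> R) (p : 'I_m -> R)
  : Prop :=
  is_dist p /\ positive_vec (hull_point C p) /\
  forall q : 'I_m -> R, is_dist q -> positive_vec (hull_point C q) ->
    KL_unif (hull_point C p) <= KL_unif (hull_point C q).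

Definition valid_instance (d n m : nat) (C : 'I_m -> 'I_d -> R)
  (V : 'I_n -> 'I_d -> R) : Prop :=
  (forall j, in_simplex (C j)) /\ (forall k, in_simplex (V k)) /\
  (forall k, in_cone C (V k)).

Definition utility (d : nat) (v c : 'I_d -> R) : R := \sum_(i < d) v i * c i.

Definition UW (d n : nat) (V : 'I_n -> 'I_d -> R) (c : 'I_d -> R) : R :=
  \sum_(k < n) utility (V k) c.

Definition expected_UW (d n m : nat) (V : 'I_n -> 'I_d -> R)
  (C : 'I_m -> 'I_d -> R) (p : 'I_m -> R) : R :=
  \sum_(j < m) p j * UW V (C j).

Definition distortion (d n m : nat) (V : 'I_n -> 'I_d -> R)
  (C : 'I_m -> 'I_d -> R) (p : 'I_m -> R) : R :=
  (\big[Num.max/0]_(j < m) UW V (C j)) / expected_UW V C p.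

End L1SocialChoice.

(* Main.v *)
Require Import Defs.
From mathcomp Require Import all_boot all_order all_algebra.
From mathcomp Require Import reals exp.
From mathcomp Require Import ring lra.
Import Order.TTheory GRing.Theory Num.Theory.
Local Open Scope ring_scope.

Set Implicit Arguments. Unset Strict Implicit.
Section H.
Variable R : realType.

Lemma ln_sub_le (x y : R) : 0 < x -> 0 < y -> ln x - ln y <= x / y - 1.
Proof.
move=> hx hy; rewrite -ln_div ?posrE //.
have h : 0 < x / y by apply: divr_gt0.
have := @le_ln1Dx R (x / y - 1); rewrite addrCA subrr addr0; apply; lra.
Qed.

Lemma term_ineq (x b t y : R) : 0 < x -> 0 < t -> t * b = y - x -> x <= 2 * y ->
  b / x <= b / y + 2 * t * b ^+ 2 / x ^+ 2.
Proof.
move=> hx ht htb hxy.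
have hy : 0 < y by lra.
have E1 : b / x - b / y = b * (y - x) / (x * y).
  by field; apply/andP; split; apply/lt0r_neq0.
have E2 : b / x - b / y - 2 * t * b ^+ 2 / x ^+ 2 = (t * b ^+ 2) * ((x - 2 * y) / (x ^+ 2 * y)).
  rewrite E1 -htb; field; apply/andP; split; apply/lt0r_neq0 => //.
have : (t * b ^+ 2) * ((x - 2 * y) / (x ^+ 2 * y)) <= 0.
  apply: mulr_ge0_le0; first by apply: mulr_ge0; [lra| apply: sqr_ge0].
  rewrite ler_pdivrMr ?mul0r; first lra.
  by apply: mulr_gt0 => //; apply: exprn_gt0.
rewrite -E2; lra.
Qed.


Lemma key (d : nat) (x w : 'I_d -> R) : (forall i, 0 < x i) -> (forall i, 0 <= w i) ->
  (forall t : R, 0 < t -> t <= 1/2 ->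
     \sum_(i < d) (w i - x i) / (x i + t * (w i - x i)) <= 0) ->
  \sum_(i < d) (w i - x i) / x i <= 0.
Proof.
move=> hx hw hT.
set A := \sum_(i < d) _.
set S := \sum_(i < d) 2 * (w i - x i) ^+ 2 / x i ^+ 2.
have hS : 0 <= S.
  apply: sumr_ge0 => i _; apply: divr_ge0; last by apply: exprn_ge0; apply: ltW.
  apply: mulr_ge0 => //; apply: sqr_ge0.
have hA : forall t : R, 0 < t -> t <= 1/2 -> A <= t * S.
  move=> t ht0 ht1.
  apply: (@le_trans _ _ (\sum_(i < d) ((w i - x i) / (x i + t * (w i - x i))
              + t * (2 * (w i - x i) ^+ 2 / x i ^+ 2)))).
    apply: ler_sum => i _.
    have -> : t * (2 * (w i - x i) ^+ 2 / x i ^+ 2) = 2 * t * (w i - x i) ^+ 2 / x i ^+ 2 by ring.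
    apply: term_ineq => //; first by ring.
    have h1 : 0 <= x i * (1 - 2 * t) by apply: mulr_ge0; [apply: ltW | lra].
    have h2 : 0 <= t * w i by apply: mulr_ge0; [apply: ltW |].
    lra.
  rewrite big_split /= -mulr_sumr.
  rewrite -/S; have := hT t ht0 ht1; lra.
rewrite leNgt; apply/negP => hA0.
have hD : 0 < 2 * S + 2 * A by lra.
have := hA (A / (2 * S + 2 * A)).
rewrite divr_gt0 // ler_pdivrMr //.
move=> /(_ isT) H; have := H ltac:(lra).
rewrite mulrAC ler_pdivlMr //; nra.
Qed.

Lemma amgm (d : nat) (v x : 'I_d -> R) (dR : R) : 0 < dR ->
  (forall i, 0 <= v i) -> \sum_(i < d) v i = 1 -> (forall i, 0 < x i) ->
  \sum_(i < d) v i / x i <= dR -> 1 / dR <= \sum_(i < d) v i * x i.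
Proof.
move=> hd hv h1 hx hs.
set l := 1 / dR.
have hl : l ^+ 2 * dR = l by rewrite /l; field; apply: lt0r_neq0.
have hl0 : 0 < l by rewrite /l divr_gt0.
have : \sum_(i < d) (2 * l * v i) <= \sum_(i < d) (v i * x i + l ^+ 2 * (v i / x i)).
  apply: ler_sum => i _.
  have hxi := hx i.
  have E : v i * x i + l ^+ 2 * (v i / x i) - 2 * l * v i = v i * ((x i - l) ^+ 2 / x i).
    by field; apply: lt0r_neq0.
  rewrite -subr_ge0 E.
    apply: mulr_ge0 => //; apply: divr_ge0; [apply: sqr_ge0 | exact: ltW].

rewrite big_split /= -!mulr_sumr h1.
have : l ^+ 2 * \sum_(i < d) v i / x i <= l ^+ 2 * dR.
  by rewrite ler_pM2l // exprn_gt0.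
lra.
Qed.


Lemma d_pos (d n m : nat) (C : 'I_m -> 'I_d -> R) (V : 'I_n -> 'I_d -> R) (p : 'I_m -> R) :
  valid_instance C V -> uproj_output C p -> (0 < d)%N.
Proof.
move=> [hC _] [[_ hp] _]; clear V.
case: d C hC => [|d] C hC //; exfalso.
case: m C p hC hp => [|m] C p hC hp.
  by move: hp; rewrite big_ord0 => /eqP; rewrite eq_sym oner_eq0.
by have [_ ] := hC ord0; rewrite big_ord0 => /eqP; rewrite eq_sym oner_eq0.
Qed.

Lemma KL_step (d : nat) (x y : 'I_d -> R) : (0 < d)%N -> positive_vec x -> positive_vec y ->
  KL_unif x <= KL_unif y -> \sum_(i < d) (ln (y i) - ln (x i)) <= 0.
Proof.
move=> hd hx hy hKL.
have hdR : 0 < (d%:R : R) by rewrite ltr0n.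
have E : KL_unif y - KL_unif x = (1 / d%:R) * \sum_(i < d) (ln (x i) - ln (y i)).
  rewrite /KL_unif -sumrB mulr_sumr; apply: eq_bigr => i _.
  rewrite !ln_div ?posrE ?divr_gt0 //; ring.
have : 0 <= (1 / d%:R) * \sum_(i < d) (ln (x i) - ln (y i)) by rewrite -E subr_ge0.
rewrite pmulr_rge0 ?divr_gt0 // => H.
have -> : \sum_(i < d) (ln (y i) - ln (x i)) = - \sum_(i < d) (ln (x i) - ln (y i)).
  by rewrite -sumrN; apply: eq_bigr => i _; ring.
lra.
Qed.

Lemma voter_bound (d m : nat) (C : 'I_m -> 'I_d -> R) (p : 'I_m -> R) (v : 'I_d -> R) :
  (0 < d)%N -> (forall j, in_simplex (C j)) -> uproj_output C p ->
  in_simplex v -> in_cone C v ->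
  1 / d%:R <= \sum_(i < d) v i * hull_point C p i.
Proof.
move=> hd hC [hp [hxpos hmin]] [hv0 hv1] [lam [hlam hvl]].
set x := hull_point C p.
have hdR : 0 < (d%:R : R) by rewrite ltr0n.
have hlam1 : \sum_(j < m) lam j = 1.
  rewrite -hv1; under [RHS]eq_bigr do rewrite hvl.
  rewrite exchange_big; apply: eq_bigr => j _.
  by rewrite -mulr_sumr (proj2 (hC j)) mulr1.
apply: (amgm hdR hv0 hv1 hxpos).
have hk := @key d x v hxpos hv0.
have H : \sum_(i < d) (v i - x i) / x i <= 0.
  apply: hk => t ht0 ht1.
  set q := fun j => (1 - t) * p j + t * lam j.
  have hq : is_dist q.
    split.
      move=> j; apply: addr_ge0; apply: mulr_ge0;
        first [lra | exact: (proj1 hp) | exact: hlam].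
    rewrite /q big_split /= -!mulr_sumr (proj2 hp) hlam1; ring.
  have hy : forall i, hull_point C q i = x i + t * (v i - x i).
    move=> i; rewrite /hull_point /q /x /hull_point hvl.
    under eq_bigr do rewrite mulrDl.
    rewrite big_split /=.
    under eq_bigr do rewrite -mulrA.
    under [X in _ + X = _]eq_bigr do rewrite -mulrA.
    rewrite -!mulr_sumr /hull_point; ring.
  have hypos : positive_vec (hull_point C q).
    move=> i; rewrite hy.
    have := hxpos i; have : 0 <= t * v i by apply: mulr_ge0; [exact: ltW | ].
    move=> h1 h2.
    have : 0 < x i * (1 - t) by apply: mulr_gt0 => //; lra.
    lra.
  have hK := KL_step hd hxpos hypos (hmin q hq hypos).
  have : t * \sum_(i < d) (v i - x i) / (x i + t * (v i - x i)) <= 0.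
    apply: le_trans hK.
    rewrite mulr_sumr; apply: ler_sum => i _.
    have hyi := hypos i.
    have := ln_sub_le (hxpos i) hyi.
    have -> : x i / hull_point C q i - 1 = - (t * ((v i - x i) / (x i + t * (v i - x i)))).
      rewrite hy; field; rewrite -hy; exact: lt0r_neq0.
    lra.
  by rewrite pmulr_rle0.
have E : \sum_(i < d) (v i - x i) / x i = \sum_(i < d) v i / x i - d%:R.
  have -> : (d%:R : R) = \sum_(i < d) (1 : R) by rewrite sumr_const card_ord.
  rewrite -sumrB; apply: eq_bigr => i _.
  by field; apply: lt0r_neq0.
move: H; rewrite E; lra.
Qed.

Lemma expected_eq (d n m : nat) (C : 'I_m -> 'I_d -> R) (V : 'I_n -> 'I_d -> R) (p : 'I_m -> R) :
  expected_UW V C p = \sum_(k < n) \sum_(i < d) V k i * hull_point C p i.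
Proof.
rewrite /expected_UW /UW /utility.
under eq_bigr do rewrite mulr_sumr.
rewrite exchange_big; apply: eq_bigr => k _.
under eq_bigr do rewrite mulr_sumr.
rewrite exchange_big; apply: eq_bigr => i _.
rewrite /hull_point mulr_sumr; apply: eq_bigr => j _; ring.
Qed.

Lemma part1 (d n m : nat) (C : 'I_m -> 'I_d -> R) (V : 'I_n -> 'I_d -> R) (p : 'I_m -> R) :
  valid_instance C V -> uproj_output C p -> n%:R / d%:R <= expected_UW V C p.
Proof.
move=> hI hU.
have hd := d_pos hI hU.
move: hI => [hC [hV hcone]].
rewrite expected_eq.
have -> : (n%:R / d%:R : R) = \sum_(k < n) (1 / d%:R).
  by rewrite sumr_const card_ord -mulr_natl; ring.
apply: ler_sum => k _.
exact: voter_bound.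
Qed.

End H.
Unset Implicit Arguments.

Theorem theorem5 (R : realType) :
  (forall (d n m : nat) (C : 'I_m -> 'I_d -> R) (V : 'I_n -> 'I_d -> R)
          (p : 'I_m -> R),
     valid_instance C V -> uproj_output C p ->
     n%:R / d%:R <= expected_UW V C p)
  /\
  (exists K : R, 0 < K /\
     forall (d n m : nat) (C : 'I_m -> 'I_d -> R) (V : 'I_n -> 'I_d -> R)
            (p : 'I_m -> R),
       valid_instance C V -> uproj_output C p ->
       distortion V C p <= K * d%:R).
Proof.
split; first exact: part1.
exists 1; split; first exact: ltr01.
move=> d n m C V p hI hU.
have hd := d_pos hI hU.
have hE := part1 hI hU.
have hdR : 0 < (d%:R : R) by rewrite ltr0n.
have hn : 0 <= (n%:R : R) by [].
have hM : \big[Num.max/0]_(j < m) UW V (C j) <= n%:R.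
  apply: bigmax_le => // j _.
  move: hI => [hC [hV _]].
  have -> : (n%:R : R) = \sum_(k < n) (1 : R) by rewrite sumr_const card_ord.
  rewrite /UW; apply: ler_sum => k _.
  have [hv0 hv1] := hV k; have [hc0 hc1] := hC j.
  rewrite /utility -hv1; apply: ler_sum => i _.
  apply: ler_piMr => //.
  rewrite -hc1 (bigD1 i) //= lerDl; apply: sumr_ge0 => *; exact: hc0.
rewrite /distortion mul1r.
have hE0 : 0 <= expected_UW V C p.
  by apply: le_trans hE; apply: divr_ge0 => //; exact: ltW.
case: (eqVneq (expected_UW V C p) 0) => [->|hne].
  by rewrite invr0 mulr0; exact: ltW.
have hEp : 0 < expected_UW V C p by rewrite lt0r hne.
rewrite ler_pdivrMr //.
apply: (le_trans hM).
have : n%:R <= d%:R * expected_UW V C p.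
  by rewrite -ler_pdivrMl // mulrC.
by rewrite mulrC.
Qed.
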